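(* Let $(\pi_h^k)_{k\ge 0}$ be the sequence of joint safety policies produced by the multi-agent safety policy iteration (defined in the context) from an arbitrary initial joint policy $\pi_h^0$, with an arbitrary ordering of the agents chosen at each iteration. Then: (a) for every $x\in\mathcal X$ and every $k\ge0$, $V_h^{\pi_h^{k+1}}(x)\ge V_h^{\pi_h^{k}}(x)$, and the sequence $(V_h^{\pi_h^k})_k$ converges; (b) under the tie-breaking convention in the context, the joint safety policies $\pi_h^k$ converge, i.e. are constant from some index on, to a joint policy $\pi_h^*=(\pi_{h,1}^*,\dots,\pi_{h,n}^* )$. This limit is a Nash equilibrium for the safety value function: for every agent $i\in\mathcal N$, every individual policy $\pi_{h,i}:\mathcal X\to\mathcal U_i$ and every $x\in\mathcal X$, $$V_h^{(\pi_{h,i},\pi^*_{h,-i})}(x)\le V_h^{\pi_h^*}(x).$$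
   Context: Setting. Let $\mathcal N=\{1,\dots,n\}$ be a finite set of agents, $\mathcal X$ a finite state space, $\mathcal U_i$ a finite action set for agent $i$, $\mathcal U=\prod_{i=1}^n\mathcal U_i$ the joint action space, $f:\mathcal X\times\mathcal U\to\mathcal X$ the deterministic dynamics, $h:\mathcal X\to\mathbb R$ a constraint function, and $\gamma_h\in(0,1)$ a safety discount factor. An individual policy of agent $i$ is a map $\pi_i:\mathcal X\to\mathcal U_i$. A joint policy is $\pi=(\pi_1,\dots,\pi_n)$, with $\pi(x)=(\pi_1(x),\dots,\pi_n(x))$. For a joint action $u$ and an agent $i$, $(u_i',u_{-i})$ denotes $u$ with its $i$-th component replaced by $u_i'$. The notation $(\pi_i',\pi_{-i})$ is used in the same way for policies. Safety value function. For a joint policy $\pi$, set $V_h^{\pi}(x)=\min_{t\in\mathbb N}\gamma_h^{t+1}h(x_t)$, where $x_0=x$ and $x_{t+1}=f(x_t,\pi(x_t))$. Multi-agent safety policy iteration. Given $\pi_h^k$, compute $V_h^{\pi_h^k}$ and choose an ordering $i_1,\dots,i_n$ of $\mathcal N$. Then, for each $x\in\mathcal X$ and for $j=1,\dots,n$ in turn, set $$\pi_{h,i_j}^{k+1}(x)\in\arg\max_{v\in\mathcal U_{i_j}}V_h^{\pi_h^k}\big(f(x,w^{(j)})\big),$$ where $w^{(j)}\in\mathcal U$ is the joint action with component $i_j$ equal to $v$, component $i_l$ equal to $\pi_{h,i_l}^{k+1}(x)$ for $l<j$, and component $i_l$ equal to $\pi_{h,i_l}^{k}(x)$ for $l>j$.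 Tie-breaking convention. In every argmax, if the agent's current action ($\pi^k_{h,i_j}(x)$ here) is a maximizer, it is selected. Otherwise, a maximizer is selected by a fixed deterministic rule. *)

(* Defs.v *)
From HB Require Import structures.
From mathcomp Require Import all_boot all_order all_algebra all_fingroup.
From mathcomp Require Import all_classical all_reals all_analysis.
Set Implicit Arguments. Unset Strict Implicit. Unset Printing Implicit Defensive.
Import Order.TTheory GRing.Theory Num.Theory.
Local Open Scope ring_scope.
Local Open Scope classical_set_scope.

Section MASafety.
Variables (R : realType) (n : nat) (X : finType) (U : 'I_n -> finType).

Definition jaction := forall i : 'I_n, U i.
Definition jpolicy := forall i : 'I_n, X -> U i.

Variables (f : X -> jaction -> X) (h : X -> R) (gam : R).

Definition jact (pi : jpolicy) (x : X) : jaction := fun i => pi i x.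

Definition traj (pi : jpolicy) (x : X) (t : nat) : X :=
  iter t (fun y => f y (jact pi y)) x.

Definition Vh (pi : jpolicy) (x : X) : R :=
  inf (range (fun t : nat => gam ^+ t.+1 * h (traj pi x t))).

(* the joint action w^(j) (with component i_j = s j equal to v), where
   s j is the j-th agent of the ordering, pi' the new and pi the old policy *)
Definition wj (s : {perm 'I_n}) (pi pi' : jpolicy) (x : X) (j : 'I_n)
  (v : U (s j)) : jaction :=
  @dfwith _ U (fun m => if ((s^-1)%g m < j)%N then pi' m x else pi m x) (s j) v.

Definition argmax_set (V : X -> R) (s : {perm 'I_n}) (pi pi' : jpolicy)
  (x : X) (j : 'I_n) : {set U (s j)} :=
  [set v | [forall v', V (f x (@wj s pi pi' x j v')) <= V (f x (@wj s pi pi' x j v))]].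

Definition mspi_step (s : {perm 'I_n}) (pi pi' : jpolicy) : Prop :=
  forall x j, pi' (s j) x \in argmax_set (Vh pi) s pi pi' x j.

Definition tiebreak_rule (tb : forall i : 'I_n, {set U i} -> U i) : Prop :=
  forall i (S : {set U i}), S != finset.set0 -> tb i S \in S.

Definition mspi_step_tb (tb : forall i : 'I_n, {set U i} -> U i)
  (s : {perm 'I_n}) (pi pi' : jpolicy) : Prop :=
  forall x j,
    let M := argmax_set (Vh pi) s pi pi' x j in
    pi' (s j) x = (if pi (s j) x \in M then pi (s j) x else tb (s j) M).

Definition unilateral (pi : jpolicy) (i : 'I_n) (p : X -> U i) : jpolicy :=
  @dfwith _ (fun m => X -> U m) pi i p.

End MASafety.

(* Main.v *)
Require Import Defs.
From HB Require Import structures.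
From mathcomp Require Import all_boot all_order all_algebra all_fingroup.
From mathcomp Require Import all_classical all_reals all_analysis.
From mathcomp Require Import lra zify.
Set Implicit Arguments. Unset Strict Implicit. Unset Printing Implicit Defensive.
Import Order.TTheory GRing.Theory Num.Theory.
Import numFieldNormedType.Exports.
Local Open Scope ring_scope.
Local Open Scope classical_set_scope.

Section S.
Variables (R : realType) (n : nat) (X : finType) (U : 'I_n -> finType).
Variables (f : X -> jaction U -> X) (h : X -> R) (gam : R).
Hypothesis (g0 : 0 < gam) (g1 : gam < 1).

Let V := Vh f h gam.
Let tr := traj f.

Definition B := \sum_(y : X) `|h y|.

Lemma B_ge y : `|h y| <= B.
Proof.
rewrite /B (bigD1 y) //= lerDl; apply: sumr_ge0 => i _; exact: normr_ge0.
Qed.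

Lemma B0 : 0 <= B.
Proof. apply: sumr_ge0 => i _; exact: normr_ge0. Qed.

Lemma gexp_ge0 t : 0 <= gam ^+ t.
Proof. by apply: exprn_ge0; apply: ltW. Qed.

Lemma gexp_le1 t : gam ^+ t <= 1.
Proof. by apply: exprn_ile1; [apply: ltW|apply: ltW]. Qed.

Lemma term_lb pi x t : - B <= gam ^+ t.+1 * h (tr pi x t).
Proof.
set y := tr pi x t.
have := B_ge y; have := gexp_ge0 t.+1; have := gexp_le1 t.+1.
move: (gam ^+ t.+1) (h y) => a b a1 a0.
rewrite ler_norml => /andP[b1 b2].
nra.
Qed.

Lemma term_ub pi x t : gam ^+ t.+1 * h (tr pi x t) <= gam ^+ t * B.
Proof.
set y := tr pi x t.
have := B_ge y; have := gexp_ge0 t; rewrite exprS.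
move: (gam ^+ t) (h y) => a b a0.
rewrite ler_norml => /andP[b1 b2].
have := B0 => B0'.
have gb : gam * b <= B.
  apply: (le_trans (y := gam * B)); first by apply: ler_wpM2l => //; apply: ltW.
  by rewrite ler_piMl // ltW.
rewrite -mulrA (mulrCA gam); apply: ler_wpM2l => //.
Qed.

Lemma hasl pi x : has_lbound (range (fun t => gam ^+ t.+1 * h (tr pi x t))).
Proof. by exists (- B) => _ [t _ <-]; apply: term_lb. Qed.

Lemma V_le pi x t : V pi x <= gam ^+ t.+1 * h (tr pi x t).
Proof. by apply: (ge_inf (hasl pi x)); exists t. Qed.

Lemma V_ge pi x c : (forall t, c <= gam ^+ t.+1 * h (tr pi x t)) -> c <= V pi x.
Proof.
move=> H; apply: lb_le_inf; first by exists (gam ^+ 1 * h (tr pi x 0)), 0%N.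
by move=> _ [t _ <-]; apply: H.
Qed.

Lemma V_lb pi x : - B <= V pi x.
Proof. by apply: V_ge => t; apply: term_lb. Qed.

Lemma trS pi x t : tr pi x t.+1 = tr pi (f x (jact pi x)) t.
Proof. by rewrite /tr /traj iterSr. Qed.

Lemma bell_le pi x : V pi x <= gam * V pi (f x (jact pi x)).
Proof.
rewrite -ler_pdivrMl //; apply: V_ge => t.
rewrite ler_pdivrMl // mulrA -exprS -trS; exact: V_le.
Qed.

Lemma bell_ge pi x : Num.min (gam * h x) (gam * V pi (f x (jact pi x))) <= V pi x.
Proof.
apply: V_ge => -[|t].
  by rewrite expr1 /tr /traj /= ge_min lexx.
rewrite ge_min; apply/orP; right.
rewrite exprS -mulrA trS ler_pM2l //; exact: V_le.
Qed.


Definition Aj (s : {perm 'I_n}) (pi pi' : jpolicy X U) x (m : nat) : jaction U :=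
  fun i => if ((s^-1)%g i < m)%N then pi' i x else pi i x.

Lemma wj_old (s : {perm 'I_n}) (pi pi' : jpolicy X U) (x : X) (j : 'I_n) : @wj _ _ _ s pi pi' x j (pi (s j) x) = Aj s pi pi' x j.
Proof.
apply: functional_extensionality_dep => m; rewrite /wj.
case: dfwithP => [|m' ne]; first by rewrite /Aj permK ltnn.
by [].
Qed.

Lemma wj_new (s : {perm 'I_n}) (pi pi' : jpolicy X U) (x : X) (j : 'I_n) : @wj _ _ _ s pi pi' x j (pi' (s j) x) = Aj s pi pi' x j.+1.
Proof.
apply: functional_extensionality_dep => m; rewrite /wj.
case: dfwithP => [|m' ne]; first by rewrite /Aj permK ltnSn.
rewrite /Aj ltnS (leq_eqVlt ((s^-1)%g m')); case: eqP => [E|] //=.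
exfalso; move: ne; rewrite -(permKV s m') (val_inj E); by rewrite eqxx.
Qed.

Lemma A0 (s : {perm 'I_n}) (pi pi' : jpolicy X U) (x : X) : Aj s pi pi' x 0 = jact pi x.
Proof. by apply: functional_extensionality_dep => m; rewrite /Aj ltn0. Qed.

Lemma An (s : {perm 'I_n}) (pi pi' : jpolicy X U) (x : X) : Aj s pi pi' x n = jact pi' x.
Proof. by apply: functional_extensionality_dep => m; rewrite /Aj ltn_ord. Qed.

Lemma chain (W : X -> R) (s : {perm 'I_n}) (pi pi' : jpolicy X U) (x : X) :
  (forall j, pi' (s j) x \in argmax_set f W s pi pi' x j) ->
  forall m m', (m <= m' <= n)%N ->
  W (f x (Aj s pi pi' x m)) <= W (f x (Aj s pi pi' x m')).
Proof.
move=> H m; elim=> [|m' IH].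
  by rewrite leqn0 => /andP[/eqP -> _].
case/andP; rewrite leq_eqVlt => /orP[/eqP -> //|]; rewrite ltnS => mm' m'n.
apply: (le_trans (IH _)); first by rewrite mm' ltnW.
have := H (Ordinal m'n); rewrite inE => /forallP /(_ (pi (s (Ordinal m'n)) x)).
by rewrite wj_old wj_new.
Qed.

Lemma chain_full (W : X -> R) (s : {perm 'I_n}) (pi pi' : jpolicy X U) (x : X) :
  (forall j, pi' (s j) x \in argmax_set f W s pi pi' x j) ->
  W (f x (jact pi x)) <= W (f x (jact pi' x)).
Proof.
move=> H; rewrite -(A0 s pi pi' x) -(An s pi pi' x); apply: chain H _ _ _; by rewrite leqnn.
Qed.

Lemma chain_strict (W : X -> R) (s : {perm 'I_n}) (pi pi' : jpolicy X U) (x : X) j :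
  (forall j, pi' (s j) x \in argmax_set f W s pi pi' x j) ->
  pi (s j) x \notin argmax_set f W s pi pi' x j ->
  W (f x (jact pi x)) < W (f x (jact pi' x)).
Proof.
move=> H Hj; rewrite -(A0 s pi pi' x) -(An s pi pi' x).
apply: (le_lt_trans (chain H (m := 0) (m' := j) _)); first by rewrite /= ltnW.
apply: (lt_le_trans (y := W (f x (Aj s pi pi' x j.+1)))); last first.
  by apply: chain H _ _ _; rewrite ltn_ord leqnn.
move: Hj; rewrite inE negb_forall => /existsP[v'].
rewrite -ltNge wj_old => lt1.
apply: (lt_le_trans lt1).
by have := H j; rewrite inE => /forallP /(_ v'); rewrite wj_new.
Qed.

Lemma improve (s : {perm 'I_n}) (pi pi' : jpolicy X U) :
  mspi_step f h gam s pi pi' -> forall x, V pi x <= V pi' x.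
Proof.
move=> st.
have Q : forall x, V pi (f x (jact pi x)) <= V pi (f x (jact pi' x)).
  by move=> x; apply: chain_full => j; apply: st.
suff : forall t x, V pi x <= gam ^+ t.+1 * h (tr pi' x t).
  by move=> H x; apply: V_ge => t; apply: H.
elim=> [|t IH] x.
  by rewrite (V_le pi x 0).
rewrite trS; apply: (le_trans (bell_le pi x)).
rewrite exprS -mulrA ler_pM2l //.
exact: (le_trans (Q x) (IH _)).
Qed.


Lemma ev_const (P : finType) (g : P -> R) (a : nat -> R) :
  (forall k, a k <= a k.+1) -> (forall k, exists p, a k = g p) ->
  exists K, forall k, (K <= k)%N -> a k = a K.
Proof.
move=> inc wit.
have mono : forall k d, a k <= a (k + d)%N.
  move=> k; elim=> [|d IH]; first by rewrite addn0.
  by rewrite addnS; apply: (le_trans IH).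
pose c k := #|[pred p | g p <= a k]|.
have step : forall K0, (forall k, (K0 <= k)%N -> a k = a K0) \/
    exists k, (c K0 < c k)%N.
  move=> K0; case: (pselect (forall k, (K0 <= k)%N -> a k = a K0)) => H; first by left.
  right; move/existsNP: H => [k /not_implyP [Kk ne]].
  have lt : a K0 < a k.
    rewrite lt_neqAle; apply/andP; split; first by apply/eqP => E; apply: ne.
    by have := mono K0 (k - K0)%N; rewrite subnKC.
  have [p ep] := wit k.
  exists k; apply: proper_card; apply/fintype.properP; split.
    apply/fintype.subsetP => q; rewrite !inE => Hq; exact: (le_trans Hq (ltW lt)).
  by exists p; rewrite !inE ?ep //= -ltNge -ep.
have cle : forall k, (c k <= #|P|)%N by move=> k; exact: max_card.
suff : forall d K0, (#|P| - c K0 <= d)%N -> exists K, forall k, (K <= k)%N -> a k = a K.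
  by move=> /(_ _ 0%N (leqnn _)).
elim=> [|d IH] K0 HK0; (case: (step K0) => [H|[k Hk]]; first by exists K0).
  by have := cle k; lia.
apply: (IH k); have := cle k; lia.
Qed.


Lemma unif (Q : X -> nat -> Prop) :
  (forall x, exists K, forall k, (K <= k)%N -> Q x k) ->
  exists K, forall x k, (K <= k)%N -> Q x k.
Proof.
move=> H.
suff [K HK] : exists K, forall x, x \in enum X -> forall k, (K <= k)%N -> Q x k.
  by exists K => x k Kk; apply: HK => //; rewrite mem_enum.
elim: (enum X) => [|y s [K IH]]; first by exists 0%N.
have [Ky HKy] := H y.
exists (maxn K Ky) => x; rewrite inE => /orP[/eqP -> | xs] k Kk.
  by apply: HKy; apply: leq_trans Kk; rewrite leq_maxr.
by apply: IH => //; apply: leq_trans Kk; rewrite leq_maxl.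
Qed.

Lemma exmax (T : finType) (g : T -> R) (t0 : T) : exists v, forall v', g v' <= g v.
Proof.
case: (@arg_maxP _ _ T t0 xpredT g isT) => v _ Hv.
by exists v => v'; exact: Hv.
Qed.

Lemma M_ne (W : X -> R) (s : {perm 'I_n}) (pi pi' : jpolicy X U) (x : X) j :
  argmax_set f W s pi pi' x j != finset.set0.
Proof.
have [v Hv] := exmax (fun v => W (f x (@wj _ _ _ s pi pi' x j v))) (pi (s j) x).
apply/set0Pn; exists v; rewrite inE; apply/forallP => v'; exact: Hv.
Qed.

Lemma step_tb_step tb (s : {perm 'I_n}) (pi pi' : jpolicy X U) :
  tiebreak_rule tb -> mspi_step_tb f h gam tb s pi pi' -> mspi_step f h gam s pi pi'.
Proof.
move=> Htb st x j; have := st x j => /= ->.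
case: ifP => // _; apply: Htb; exact: M_ne.
Qed.

Lemma small (c K : R) : 0 <= K -> (forall m, c <= K * gam ^+ m) -> c <= 0.
Proof.
move=> K0 H; rewrite leNgt; apply/negP => c0.
have K1 : 0 < K + 1 by lra.
have e0 : 0 < c / (K + 1) by apply: divr_gt0.
have ng : `|gam| < 1 by rewrite ger0_norm // ltW.
have := @cvgr_lt R _ _ _ _ _ (cvg_expr ng) _ e0 => -[N _ HN].
have := HN N (leqnn N) => /= lt1.
have := H N => le1.
have : K * gam ^+ N <= K * (c / (K + 1)) by apply: ler_wpM2l => //; apply: ltW.
have : K * (c / (K + 1)) < c.
  rewrite mulrA ltr_pdivrMr //; nra.
lra.
Qed.


Lemma jact_uni (pistar : jpolicy X U) i (p : X -> U i) y :
  jact (unilateral pistar p) y = @dfwith _ U (jact pistar y) i (p y).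
Proof.
apply: functional_extensionality_dep => m; rewrite /jact /unilateral.
case: (eqVneq i m) => [<-|ne].
  by rewrite /dfwith; case: eqP => // e; rewrite eq_axiomK.
rewrite /dfwith; case: eqP => // e; by rewrite e eqxx in ne.
Qed.

Lemma nash (pistar : jpolicy X U) i (p : X -> U i) :
  (forall y (v : U i), V pistar (f y (@dfwith _ U (jact pistar y) i v)) <= V pistar (f y (jact pistar y))) ->
  forall x, V (unilateral pistar p) x <= V pistar x.
Proof.
move=> Hn.
set pi' := unilateral pistar p.
have Q : forall y, V pistar (f y (jact pi' y)) <= V pistar (f y (jact pistar y)).
  by move=> y; rewrite /pi' jact_uni; apply: Hn.
have cl : forall m x, (exists t, (t < m)%N /\ gam ^+ t.+1 * h (tr pi' x t) <= V pistar x)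
   \/ gam ^+ m * V pistar (tr pi' x m) <= V pistar x.
  elim=> [|m IH] x.
    by right; rewrite expr0 mul1r.
  have := bell_ge pistar x; rewrite ge_min => /orP[H1|H2].
    by left; exists 0%N; split => //; rewrite expr1.
  have le2 : gam * V pistar (f x (jact pi' x)) <= V pistar x.
    apply: le_trans H2; rewrite ler_pM2l //; exact: Q.
  case: (IH (f x (jact pi' x))) => [[t [tm Ht]]|Hr].
    left; exists t.+1; split => //.
    rewrite trS exprS -mulrA; apply: le_trans le2; rewrite ler_pM2l //.
  right; rewrite trS exprS -mulrA; apply: le_trans le2; rewrite ler_pM2l //.
move=> x.
case: (pselect (exists t, gam ^+ t.+1 * h (tr pi' x t) <= V pistar x)) => [[t Ht]|Hno].
  exact: le_trans (V_le pi' x t) Ht.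
have Hall : forall m, gam ^+ m * V pistar (tr pi' x m) <= V pistar x.
  move=> m; case: (cl m x) => // -[t [_ Ht]]; exfalso; apply: Hno; by exists t.
rewrite -subr_le0; apply: (small (K := B + B)); first by have := B0; lra.
move=> m.
have h1 := le_trans (V_le pi' x m) (term_ub pi' x m).
have h2 : gam ^+ m * (- B) <= V pistar x.
  apply: le_trans (Hall m); apply: ler_wpM2l; [exact: gexp_ge0 | exact: V_lb].
rewrite mulrDl; lra.
Qed.


Lemma partA (pis : nat -> jpolicy X U) (ord : nat -> {perm 'I_n}) :
  (forall k, mspi_step f h gam (ord k) (pis k) (pis k.+1)) ->
  (forall k x, V (pis k) x <= V (pis k.+1) x) /\
  (forall x, exists l : R, (fun k => V (pis k) x) @ \oo --> l).
Proof.
move=> st.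
have mono : forall k x, V (pis k) x <= V (pis k.+1) x.
  by move=> k; exact: improve (st k).
split => // x; exists (sup (range (fun k => V (pis k) x))).
apply: nondecreasing_cvgn.
  by apply/nondecreasing_seqP => k; exact: mono.
exists (gam * h x) => _ [k _ <-].
by have := V_le (pis k) x 0; rewrite expr1.
Qed.

Lemma permK_ind (s : {perm 'I_n}) (P : forall i : 'I_n, Prop) :
  (forall j, P (s j)) -> forall i, P i.
Proof. by move=> H i; rewrite -(permKV s i); apply: H. Qed.


Lemma wj_same (s : {perm 'I_n}) (pi : jpolicy X U) (x : X) (j : 'I_n) v :
  @wj _ _ _ s pi pi x j v = @dfwith _ U (jact pi x) (s j) v.
Proof.
rewrite /wj; have -> : (fun m => if ((s^-1)%g m < j)%N then pi m x else pi m x) = jact pi x.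
  by apply: functional_extensionality_dep => m; rewrite if_same.
by [].
Qed.

Lemma Aj_same (s : {perm 'I_n}) (pi : jpolicy X U) (x : X) m :
  Aj s pi pi x m = jact pi x.
Proof. by apply: functional_extensionality_dep => i; rewrite /Aj if_same. Qed.

Lemma partB (tb : forall i : 'I_n, {set U i} -> U i) : tiebreak_rule tb ->
   forall (pis : nat -> jpolicy X U) (ord : nat -> {perm 'I_n}),
     (forall k, mspi_step_tb f h gam tb (ord k) (pis k) (pis k.+1)) ->
     exists (pistar : jpolicy X U) (K : nat),
       (forall k, (K <= k)%N -> forall i x, pis k i x = pistar i x) /\
       (forall (i : 'I_n) (p : X -> U i) (x : X),
          V (unilateral pistar p) x <= V pistar x).
Proof.
move=> Htb pis ord st.
have st' : forall k, mspi_step f h gam (ord k) (pis k) (pis k.+1).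
  by move=> k; apply: step_tb_step (st k).
have mono : forall k x, V (pis k) x <= V (pis k.+1) x.
  by move=> k; exact: improve (st' k).
have [K1 HK1] : exists K1, forall x k, (K1 <= k)%N -> V (pis k) x = V (pis K1) x.
  have H1 : forall x, exists K, forall k, (K <= k)%N ->
      forall k', (k <= k')%N -> V (pis k') x = V (pis k) x.
    move=> x.
    pose P := {dffun forall i : 'I_n, {ffun X -> U i}}.
    have wit : forall k, exists p : P, V (pis k) x = V (fun i y => p i y) x.
      move=> k; exists [ffun i => [ffun y => pis k i y]] => /=.
      congr (V _ x); apply: functional_extensionality_dep => i.
      by apply: functional_extensionality_dep => y; rewrite !ffunE.
    have [K HK] := @ev_const P (fun p => V (fun i y => p i y) x) (fun k => V (pis k) x)
       (fun k => mono k x) wit.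
    exists K => k Kk k' kk'; rewrite /= in HK; rewrite (HK _ Kk) HK //; exact: leq_trans kk'.
  have [K HK] := unif H1.
  by exists K => x k Kk; rewrite (HK x K (leqnn K) k Kk).
have EV : forall k, (K1 <= k)%N -> Vh f h gam (pis k) = Vh f h gam (pis K1).
  move=> k Kk; apply: funext => x; exact: HK1.
set Vs := Vh f h gam (pis K1).
have H2 : forall x, exists K, forall m, (K <= m)%N ->
    forall m', (m <= m')%N -> forall i, pis (K1 + m').+1 i x = pis (K1 + m') i x.
  move=> x.
  pose a m := Vs (f x (jact (pis (K1 + m)%N) x)).
  have mem : forall m j, pis (K1 + m).+1 (ord (K1 + m)%N j) x \in
      argmax_set f Vs (ord (K1 + m)%N) (pis (K1 + m)%N) (pis (K1 + m).+1) x j.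
    by move=> m j; rewrite /Vs -(EV (K1 + m)%N) ?leq_addr //; apply: st'.
  have inc : forall m, a m <= a m.+1.
    by move=> m; rewrite /a addnS; apply: chain_full; apply: mem.
  have [K HK] := @ev_const X Vs a inc (fun m => ex_intro _ _ erefl).
  exists K => m Km m' mm'.
  apply: (permK_ind (s := ord (K1 + m')%N)) => j.
  have := st (K1 + m')%N x j => /=; rewrite (EV (K1 + m')%N) ?leq_addr //.
  case: ifP => [_ -> //|Hn E]; exfalso.
  have := chain_strict (mem m') (negbT Hn).
  have Km' : (K <= m')%N := leq_trans Km mm'.
  have e1 : a m'.+1 = a m' by rewrite (HK m'.+1 (leqW Km')) (HK m' Km').
  by rewrite /a addnS in e1; rewrite e1 ltxx.
have [K2 HK2] := unif H2.
set K := (K1 + K2)%N.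
have stab : forall k, (K <= k)%N -> forall i x, pis k i x = pis K i x.
  move=> k Kk; rewrite -(subnKC Kk); elim: (k - K)%N => [|d IH] i x; first by rewrite addn0.
  rewrite addnS -IH /K -addnA; apply: (HK2 x K2) => //; exact: leq_addr.
exists (pis K), K; split => //.
have E : pis K.+1 = pis K.
  apply: functional_extensionality_dep => i; apply: funext => x; exact: stab.
suff Nh : forall i y (v : U i), Vh f h gam (pis K) (f y (@dfwith _ U (jact (pis K) y) i v))
   <= Vh f h gam (pis K) (f y (jact (pis K) y)).
  by move=> i p x; apply: nash; apply: Nh.
apply: (permK_ind (s := ord K)) => j y v.
have inM : pis K (ord K j) y \in argmax_set f (Vh f h gam (pis K)) (ord K) (pis K) (pis K) y j.
  have := st K y j => /=; rewrite E; case: ifP => // Hn E2.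
  have := Htb _ _ (M_ne (Vh f h gam (pis K)) (ord K) (pis K) (pis K) y j).
  by rewrite -E2 Hn.
move: inM; rewrite inE => /forallP /(_ v).
by rewrite wj_old wj_same Aj_same.
Qed.

End S.

Theorem theorem1 (R : realType) (n : nat) (X : finType) (U : 'I_n -> finType)
  (f : X -> jaction U -> X) (h : X -> R) (gam : R) :
  0 < gam < 1 ->
  (* (a) *)
  (forall (pis : nat -> jpolicy X U) (ord : nat -> {perm 'I_n}),
     (forall k, mspi_step f h gam (ord k) (pis k) (pis k.+1)) ->
     (forall k x, Vh f h gam (pis k) x <= Vh f h gam (pis k.+1) x) /\
     (forall x, exists l : R, (fun k => Vh f h gam (pis k) x) @ \oo --> l))
  /\
  (* (b) *)
  (forall (tb : forall i : 'I_n, {set U i} -> U i), tiebreak_rule tb ->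
   forall (pis : nat -> jpolicy X U) (ord : nat -> {perm 'I_n}),
     (forall k, mspi_step_tb f h gam tb (ord k) (pis k) (pis k.+1)) ->
     exists (pistar : jpolicy X U) (K : nat),
       (forall k, (K <= k)%N -> forall i x, pis k i x = pistar i x) /\
       (forall (i : 'I_n) (p : X -> U i) (x : X),
          Vh f h gam (unilateral pistar p) x <= Vh f h gam pistar x)).
Proof.
case/andP => g0 g1; split.
  by move=> pis ord st; apply: (partA g0 g1 st).
by move=> tb Htb pis ord st; apply: (partB g0 g1 Htb st).
Qed.
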